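(* Let $Q,P\in S^2_0(\mathbb R^4)$ with $\det Q<0$, and suppose that $P=\mu Q$ for some $\mu\in\mathbb R\setminus\{0\}$ (coupled condition) and that $(\operatorname{Adj}Q)_0=\nu\,(P^2)_0$ for some $\nu\in\mathbb R$ (co-coupled condition). Then there exist $g\in\mathrm{SO}(4)$ and nonzero reals $q,p$ such that $Q=q\,gDg^T$ and $P=p\,gDg^T$, where $D=\operatorname{diag}(-3,1,1,1)$. In other words, modulo equivalence and scaling, the unique invariant nearly-Kähler structure on $S^3\times S^3$ corresponds to $(Q,P)=(q\,D,p\,D)$ with cohomology class $c=0$.
   Context: $S^2_0(\mathbb R^4)$ is the space of real symmetric trace-free $4\times4$ matrices; $X_0=X-\frac14(\operatorname{tr}X)I$; $\operatorname{Adj}$ is the adjugate. (In the paper's framework, invariant half-flat structures on $S^3\times S^3$ with $[\gamma]=0$ are encoded by commuting pairs $(Q,P)$ of such matrices with $\det Q<0$, where $P$ encodes $\omega$ and $Q$ encodes a primitive of $\gamma$; nearly-Kähler means both coupled and co-coupled, which in matrix form reads as the two conditions above.) *)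

(* Defs.v *)
(* Real numbers are modelled by an arbitrary real closed field
   R : rcfType (the statement is purely algebraic). *)
From HB Require Import structures.
From mathcomp Require Import all_boot all_order all_algebra.
Set Implicit Arguments. Unset Strict Implicit. Unset Printing Implicit Defensive.
Import Order.TTheory GRing.Theory Num.Theory.
Local Open Scope ring_scope.

Definition sym_tracefree {R : rcfType} (X : 'M[R]_4) : Prop :=
  X^T = X /\ \tr X = 0.

Definition tf_part {R : rcfType} (X : 'M[R]_4) : 'M[R]_4 :=
  X - ((\tr X) / 4%:R)%:M.

Definition in_SO4 {R : rcfType} (g : 'M[R]_4) : Prop :=
  g *m g^T = 1%:M /\ \det g = 1.

Definition Dmat {R : rcfType} : 'M[R]_4 :=
  \matrix_(i < 4, j < 4) (if i == j then (if i == 0 :> nat then -3%:R else 1) else 0).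

(* Main.v *)
Require Import Defs.
From HB Require Import structures.
From mathcomp Require Import all_boot all_order all_algebra.
From mathcomp Require Import ring lra.
Set Implicit Arguments. Unset Strict Implicit. Unset Printing Implicit Defensive.
Import Order.TTheory GRing.Theory Num.Theory.
Local Open Scope ring_scope.

Section SK.
Variable R : rcfType.

Lemma det3 (f : nat -> nat -> R) :
  \det (\matrix_(i < 3, j < 3) f i j) =
  f 0 0 * (f 1 1 * f 2 2 - f 1 2 * f 2 1)
  - f 0 1 * (f 1 0 * f 2 2 - f 1 2 * f 2 0)
  + f 0 2 * (f 1 0 * f 2 1 - f 1 1 * f 2 0).
Proof.
rewrite (expand_det_row _ 0) !big_ord_recl big_ord0 /cofactor.
rewrite !(expand_det_row _ 0) !big_ord_recl !big_ord0 /cofactor !det_mx11 !mxE /=.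
rewrite /bump /=.
ring.
Qed.

Lemma adj4 (f : nat -> nat -> R) (A : 'M[R]_4) : A = \matrix_(i < 4, j < 4) f i j ->
  f 3 3 = - (f 0 0 + f 1 1 + f 2 2) ->
  \adj A = - (A *m A *m A) + (\tr (A *m A) / 2%:R) *: A + (\tr (A *m A *m A) / 3%:R)%:M.
Proof.
move=> -> h33; apply/matrixP => i j.
rewrite !mxE /cofactor.
have -> : row' j (col' i (\matrix_(i < 4, j < 4) f i j)) = \matrix_(k < 3, l < 3) (fun a b => f (bump j a) (bump i b)) k l.
  by apply/matrixP => k l; rewrite !mxE.
rewrite (det3 (fun a b => f (bump j a) (bump i b))) /mxtrace.
do 4 rewrite ?big_ord_recl ?big_ord0 ?mxE.
case: i => [[|[|[|[|//]]]] Hi]; case: j => [[|[|[|[|//]]]] Hj];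
rewrite /= /bump /= ?h33; field; by rewrite ?pnatr_eq0.
Qed.

Lemma adjQ (Q : 'M[R]_4) : \tr Q = 0 ->
  \adj Q = - (Q ^+ 3) + (\tr (Q ^+ 2) / 2%:R) *: Q + (\tr (Q ^+ 3) / 3%:R)%:M.
Proof.
move=> hT.
have eQ : Q = \matrix_(i < 4, j < 4) (fun a b => Q (inord a) (inord b)) i j.
  by apply/matrixP => i j; rewrite mxE !inord_val.
have h33 : (fun a b => Q (inord a) (inord b)) 3%N 3%N = - ((fun a b => Q (inord a) (inord b)) 0%N 0%N + (fun a b => Q (inord a) (inord b)) 1%N 1%N + (fun a b => Q (inord a) (inord b)) 2%N 2%N).
  move: hT; rewrite {1}eQ /mxtrace !big_ord_recl big_ord0 !mxE /= /bump /=.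
  move=> h; lra.
rewrite (@adj4 (fun a b => Q (inord a) (inord b)) Q eQ h33).
have e3 : Q *m Q *m Q = Q ^+ 3 by rewrite !mulmxE -expr2 -exprSr.
have e2 : Q *m Q = Q ^+ 2 by rewrite mulmxE -expr2.
by rewrite e3 e2.
Qed.

End SK.

Section SA.
Variable R : rcfType.
Implicit Types Q : 'M[R]_4.

Lemma sm0 : (0 : R)%:M = 0 :> 'M[R]_4.
Proof. by apply/matrixP => i j; rewrite !mxE mul0rn. Qed.

Definition NF (u4 u3 u2 u1 u0 : R) : {poly R} :=
  u4%:P * 'X^4 + u3%:P * 'X^3 + u2%:P * 'X^2 + u1%:P * 'X + u0%:P.

Lemma hornNF Q u4 u3 u2 u1 u0 : horner_mx Q (NF u4 u3 u2 u1 u0) =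
  u4 *: Q^+4 + u3 *: Q^+3 + u2 *: Q ^+ 2 + u1 *: Q + u0%:M.
Proof.
rewrite /NF !rmorphD !rmorphM /= !horner_mx_C !horner_mx_X -!mulmxE !mul_scalar_mx !mulmxE.
by rewrite !exprS expr0 !mulr1.
Qed.

Lemma trNF Q u4 u3 u2 u1 u0 : \tr (horner_mx Q (NF u4 u3 u2 u1 u0)) =
  u4 * \tr (Q^+4) + u3 * \tr (Q^+3) + u2 * \tr (Q ^+ 2) + u1 * \tr Q + u0 * 4%:R.
Proof. by rewrite hornNF !mxtraceD !mxtraceZ mxtrace_scalar mulr_natr. Qed.

Lemma linNF Q u1 u0 : \tr Q = 0 -> Q != 0 ->
  horner_mx Q (NF 0 0 0 u1 u0) = 0 -> u1 = 0 /\ u0 = 0.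
Proof.
move=> hT hQ h.
have t := congr1 mxtrace h; rewrite trNF hT mxtrace0 in t.
have u00 : u0 = 0 by lra.
split=> //.
move: h; rewrite hornNF u00 sm0 !scale0r !add0r addr0 => /eqP.
by rewrite scaler_eq0 (negbTE hQ) orbF => /eqP.
Qed.

Lemma annM Q p q : horner_mx Q q = 0 -> horner_mx Q (p * q) = 0.
Proof. by move=> h; rewrite rmorphM /= h mulr0. Qed.

Lemma annD Q p q : horner_mx Q p = 0 -> horner_mx Q q = 0 -> horner_mx Q (p + q) = 0.
Proof. by move=> h1 h2; rewrite rmorphD /= h1 h2 addr0. Qed.

Lemma key Q (kap c : R) : \tr Q = 0 -> \det Q < 0 ->
  \adj Q = kap *: Q ^+ 2 + c%:M ->
  exists a : R, a != 0 /\ horner_mx Q (NF 0 0 1 (2%:R * a) (- (3%:R * a ^+ 2))) = 0.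
Proof.
move=> hT hd hk.
set p2 := \tr (Q ^+ 2); set p3 := \tr (Q^+3); set d := \det Q.
have Q0 : Q != 0.
  by apply/eqP => Q0; move: hd; rewrite /d Q0 det0 ltxx.
have hadj : \adj Q = horner_mx Q (NF 0 (-1) 0 (p2/2%:R) (p3/3%:R)).
  by rewrite hornNF adjQ // !scale0r ?add0r ?addr0 scaleN1r.
have hk' : \adj Q = horner_mx Q (NF 0 0 kap 0 c).
  by rewrite hornNF hk !scale0r ?add0r ?addr0.
have a1 : horner_mx Q (NF 0 (-1) (-kap) (p2/2%:R) (p3/3%:R - c)) = 0.
  have -> : NF 0 (-1) (-kap) (p2/2%:R) (p3/3%:R - c) =
    NF 0 (-1) 0 (p2/2%:R) (p3/3%:R) - NF 0 0 kap 0 c by rewrite /NF; ring.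
  by rewrite rmorphB /= -hadj -hk' subrr.
have a2 : horner_mx Q (NF (-1) 0 (p2/2%:R) (p3/3%:R) (-d)) = 0.
  have -> : NF (-1) 0 (p2/2%:R) (p3/3%:R) (-d) =
    'X * NF 0 (-1) 0 (p2/2%:R) (p3/3%:R) - d%:P by rewrite /NF; ring.
  by rewrite rmorphB rmorphM /= horner_mx_X horner_mx_C -hadj -mulmxE mul_mx_adj subrr.
have a3 : horner_mx Q (NF 0 kap 0 c (-d)) = 0.
  have -> : NF 0 kap 0 c (-d) = NF (-1) 0 (p2/2%:R) (p3/3%:R) (-d) + (- 'X) *
     NF 0 (-1) (-kap) (p2/2%:R) (p3/3%:R - c) by rewrite /NF; ring.
  by apply: annD => //; apply: annM.
have kap0 : kap != 0.
  apply/eqP => k0; move: a3; rewrite k0 => /(linNF hT Q0) [_ /eqP].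
  by rewrite oppr_eq0 => /eqP d0; move: hd; rewrite -/d d0 ltxx.
have a4 : horner_mx Q (NF 0 0 (- kap ^+ 2) (kap * p2/2%:R + c) (kap * (p3/3%:R - c) - d)) = 0.
  have -> : NF 0 0 (- kap ^+ 2) (kap * p2/2%:R + c) (kap * (p3/3%:R - c) - d) =
    kap%:P * NF 0 (-1) (-kap) (p2/2%:R) (p3/3%:R - c) + NF 0 kap 0 c (-d) by rewrite /NF; ring.
  by apply: annD => //; apply: annM.
pose b := - (kap * p2/2%:R + c) / kap ^+ 2.
pose g := - (kap * (p3/3%:R - c) - d) / kap ^+ 2.
have k2 : - kap ^+ 2 != 0 by rewrite oppr_eq0 sqrf_eq0.
have hq : horner_mx Q (NF 0 0 1 b g) = 0.
  have eb : kap * p2/2%:R + c = - kap ^+ 2 * b by rewrite /b; field.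
  have eg : kap * (p3/3%:R - c) - d = - kap ^+ 2 * g by rewrite /g; field.
  have e : NF 0 0 (- kap ^+ 2) (kap * p2/2%:R + c) (kap * (p3/3%:R - c) - d) =
     (- kap ^+ 2)%:P * NF 0 0 1 b g by rewrite eb eg /NF; ring.
  move: a4; rewrite e rmorphM /= horner_mx_C -mulmxE mul_scalar_mx => /eqP.
  by rewrite scaler_eq0 (negbTE k2) /= => /eqP.
have tq : p2 + g * 4%:R = 0.
  have t := congr1 mxtrace hq; rewrite trNF hT mxtrace0 in t; lra.
have a5 : horner_mx Q (NF 0 1 0 (g - b ^+ 2) (- (b * g))) = 0.
  have -> : NF 0 1 0 (g - b ^+ 2) (- (b * g)) = ('X - b%:P) * NF 0 0 1 b g by rewrite /NF; ring.
  exact: annM.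
have t5 : p3 - b * g * 4%:R = 0.
  have t := congr1 mxtrace a5; rewrite trNF hT mxtrace0 in t; lra.
have a6 : horner_mx Q (NF 0 0 0 (p3/3%:R + b * (b ^+ 2-g-p2/2%:R) - b * g) (-d + g * (b ^+ 2-g-p2/2%:R))) = 0.
  have -> : NF 0 0 0 (p3/3%:R + b * (b ^+ 2-g-p2/2%:R) - b * g) (-d + g * (b ^+ 2-g-p2/2%:R)) =
    NF (-1) 0 (p2/2%:R) (p3/3%:R) (-d) + ('X^2 - b%:P*'X + (b ^+ 2-g-p2/2%:R)%:P) * NF 0 0 1 b g
    by rewrite /NF; ring.
  by apply: annD => //; apply: annM.
have [e1 e2] := linNF hT Q0 a6.
have hp2 : p2 = - (4%:R * g) by lra.
have hp3 : p3 = 4%:R * b * g by lra.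
rewrite hp2 hp3 in e1 e2.
have hdd : d = g * b ^+ 2 + g ^+ 2.
  have -> : d = d + (- d + g * (b ^+ 2 - g - - (4%:R * g) / 2%:R)) by rewrite e2 addr0.
  by field.
have b0 : b != 0.
  apply/eqP => b0; move: hd; rewrite -/d hdd b0 expr0n /= mulr0 add0r.
  by rewrite ltNge sqr_ge0.
have hbg : b * (b ^+ 2 + 4%:R * g / 3%:R) = 0.
  by rewrite -e1; field.
move: hbg => /eqP; rewrite mulf_eq0 (negbTE b0) /= => /eqP hbg.
exists (b / 2%:R); split.
  by rewrite mulf_neq0 // invr_eq0 pnatr_eq0.
have -> : 2%:R * (b / 2%:R) = b by field.
have -> : - (3%:R * (b / 2%:R) ^+ 2) = g.
  have hg : g = - (3%:R * b ^+ 2 / 4%:R).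
    apply/eqP; rewrite -subr_eq0; apply/eqP.
    have -> : g - - (3%:R * b ^+ 2 / 4%:R) = (3%:R / 4%:R) * (b ^+ 2 + 4%:R * g / 3%:R) by field.
    by rewrite hbg mulr0.
  by rewrite hg; field.
exact: hq.
Qed.
End SA.

Section SG.
Variable R : rcfType.

Lemma sym_idem0 (K : 'M[R]_4) : K^T = K -> K *m K = K -> \tr K = 0 -> K = 0.
Proof.
move=> hS hI hT.
have sK : forall i k, K k i = K i k by move=> i k; rewrite -[in LHS]hS mxE.
have e : \sum_i \sum_k K i k ^+ 2 = \tr (K *m K).
  rewrite /mxtrace; apply: eq_bigr => i _; rewrite mxE.
  by apply: eq_bigr => k _; rewrite sK expr2.
rewrite hI hT in e.
have e1 := psumr_eq0P (fun i _ => sumr_ge0 _ (fun k _ => sqr_ge0 (K i k))) e.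
apply/matrixP => i k; rewrite mxE.
have e2 := psumr_eq0P (fun k _ => sqr_ge0 (K i k)) (e1 i isT).
by apply/eqP; rewrite -sqrf_eq0 e2.
Qed.

Lemma pos_diag (M : 'M[R]_4) : \tr M = 1 -> exists j, 0 < M j j.
Proof.
move=> hT; case: (pickP (fun j => 0 < M j j)) => [j hj|h]; first by exists j.
have : \tr M <= 0.
  by apply: sumr_le0 => j _; rewrite leNgt h.
by rewrite hT ler10.
Qed.

Lemma rank1 (M : 'M[R]_4) : M^T = M -> M *m M = M -> \tr M = 1 ->
  exists u : 'cV[R]_4, M = u *m u^T /\ u^T *m u = 1%:M.
Proof.
move=> hS hI hT.
have [j hj] := pos_diag hT.
pose s := Num.sqrt (M j j).
have s0 : 0 < s by rewrite /s sqrtr_gt0.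
have ss : s ^+ 2 = M j j by rewrite /s sqr_sqrtr // ltW.
pose u := s^-1 *: col j M.
have Mu : M *m u = u.
  by rewrite /u -scalemxAr colE mulmxA hI.
have uM : u^T *m M = u^T.
  by rewrite -{1}hS -trmx_mul Mu.
have uu : u^T *m u = 1%:M.
  apply/matrixP => a b; rewrite !ord1 !mxE /=.
  have hjj : \sum_k M j k * M k j = M j j by rewrite -{3}hI mxE.
  rewrite (eq_bigr (fun k => s^-1 * s^-1 * (M j k * M k j))); last first.
    by move=> k _; rewrite !mxE -{1}hS mxE; ring.
  rewrite -mulr_sumr hjj -ss; field; by rewrite gt_eqF.
exists u; split => //.
have K0 : M - u *m u^T = 0.
  apply: sym_idem0.
  - by rewrite linearB /= hS trmx_mul trmxK.
  - rewrite mulmxBl !mulmxBr hI mulmxA Mu -!mulmxA uM !mulmxA.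
    by rewrite -[u *m u^T *m u]mulmxA uu mulmx1 subrr subr0.
  - by rewrite linearB /= hT mxtrace_mulC uu mxtrace1 subrr.
by apply/eqP; rewrite -subr_eq0 K0.
Qed.

End SG.

Section SH.
Variable R : rcfType.
Local Notation e0 := (delta_mx 0 0 : 'cV[R]_4).

Lemma dot_e0 (x : 'cV[R]_4) : x^T *m e0 = (x 0 0)%:M.
Proof. by rewrite -colE; apply/matrixP => a b; rewrite !ord1 !mxE eqxx mulr1n. Qed.

Lemma e0_dot (x : 'cV[R]_4) : e0^T *m x = (x 0 0)%:M.
Proof. by rewrite -[e0^T *m x]trmxK trmx_mul trmxK dot_e0 tr_scalar_mx. Qed.

Lemma e0e0 : e0^T *m e0 = 1%:M.
Proof. by rewrite dot_e0 mxE eqxx. Qed.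

Lemma sc11 (A : 'M[R]_1) (a : R) : A 0 0 = a -> A = a%:M.
Proof. by move=> h; apply/matrixP => i j; rewrite !ord1 !mxE eqxx mulr1n. Qed.

Lemma householder (u : 'cV[R]_4) : u^T *m u = 1%:M ->
  exists H : 'M[R]_4, H *m H^T = 1%:M /\ H *m delta_mx 0 0 *m H^T = u *m u^T.
Proof.
move=> hu.
pose sg : R := if 0 <= u 0 0 then -1 else 1.
have hs : sg * sg = 1 by rewrite /sg; case: ifP => _; rewrite ?mulrNN mulr1.
have hsu : sg * u 0 0 <= 0.
  rewrite /sg; case: ifP => h; first by rewrite mulN1r oppr_le0.
  by rewrite mul1r; move/negbT: h; rewrite -ltNge => /ltW.
clearbody sg.
pose w := u - sg *: e0.
pose nw : R := 1 - 2%:R * sg * u 0 0 + sg * sg.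
have wtw : w^T *m w = nw%:M.
  have -> : w^T = u^T - sg *: e0^T by rewrite /w linearB linearZ.
  rewrite /w mulmxBl !mulmxBr -!scalemxAl -!scalemxAr.
  rewrite hu dot_e0 e0_dot e0e0.
  apply/matrixP => i j; rewrite !mxE /nw; ring.
have nw0 : 0 < nw.
 rewrite /nw hs -mulrA; move: hsu; move: (sg * u 0 0) => t ht.
 apply: addr_gt0 => //; rewrite subr_gt0; apply: le_lt_trans ltr01.
 by rewrite mulr_ge0_le0 // ler0n.

pose c : R := 2%:R / nw.
pose W := w *m w^T.
have WW : W *m W = nw *: W by rewrite /W mulmxA -[w *m w^T *m w]mulmxA wtw mul_mx_scalar -scalemxAl.
pose H := 1%:M - c *: W.
have HT : H^T = H by rewrite /H linearB linearZ /= trmx1 /W trmx_mul trmxK.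
have HH : H *m H = 1%:M.
  rewrite /H mulmxBl mul1mx mulmxBr mulmx1 -scalemxAl -scalemxAr WW.
  have hc : forall x, c * (c * (nw * x)) = 2%:R * c * x.
    by move=> x; rewrite /c; field; rewrite gt_eqF.
  by apply/matrixP => i j; rewrite !mxE hc; ring.
have hw0 : w 0 0 = u 0 0 - sg by rewrite /w !mxE eqxx /=; ring.
have hcw : c * w 0 0 = - sg.
  have e : 2%:R * (u 0 0 - sg) = - sg * nw.
    apply/eqP; rewrite -subr_eq0.
    have -> : 2%:R * (u 0 0 - sg) - - sg * nw = (1 - sg * sg) * (2%:R * u 0 0 - sg) by rewrite /nw; ring.
    by rewrite hs subrr mul0r.
  by rewrite /c hw0 mulrAC e mulfK // gt_eqF.
have He0 : H *m e0 = sg *: u.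
  rewrite /H mulmxBl mul1mx -scalemxAl /W -mulmxA dot_e0 mul_mx_scalar.
  apply/matrixP => i j; rewrite !ord1 !mxE eqxx /= mulr1n.
  have hcw' : c * (u 0 0 - sg) = - sg by rewrite -hw0.
  rewrite mulrA mulr1 hcw'.
  have hsg : sg = 1 \/ sg = -1.
    by have := hs; rewrite -expr2 => /eqP; rewrite sqrf_eq1 => /orP [/eqP->|/eqP->]; [left|right].
  by case: hsg => ->; case: (i == 0); rewrite /= ?mulr1n ?mulr0n; ring.
exists H; split; first by rewrite HT HH.
have -> : (delta_mx 0 0 : 'M[R]_4) = e0 *m e0^T by rewrite trmx_delta mul_delta_mx.
rewrite mulmxA He0 -mulmxA -trmx_mul He0 linearZ /= -scalemxAl -scalemxAr scalerA hs scale1r.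
done.
Qed.
End SH.

Section SF.
Variable R : rcfType.

Lemma Dm : (Dmat : 'M[R]_4) = 1%:M - 4%:R *: delta_mx 0 0.
Proof.
apply/matrixP => i j; rewrite !mxE.
by case: i => [[|[|[|[|//]]]] Hi]; case: j => [[|[|[|[|//]]]] Hj]; rewrite /= ?mulr1n ?mulr0n; ring.
Qed.

Lemma Fmat : exists F : 'M[R]_4, [/\ F *m F^T = 1%:M, \det F = -1 &
   F *m delta_mx 0 0 *m F^T = delta_mx 0 0].
Proof.
pose d : 'rV[R]_4 := \row_(i < 4) (if i == 3 :> nat then -1 else 1).
exists (diag_mx d); split.
- rewrite tr_diag_mx mulmx_diag; apply/matrixP => i j; rewrite !mxE.
  by case: i => [[|[|[|[|//]]]] Hi]; case: j => [[|[|[|[|//]]]] Hj]; rewrite /= ?mulr1n ?mulr0n; ring.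
- rewrite det_diag !big_ord_recl big_ord0 !mxE /=; ring.
- rewrite tr_diag_mx mul_diag_mx mul_mx_diag; apply/matrixP => i j; rewrite !mxE.
  by case: i => [[|[|[|[|//]]]] Hi]; case: j => [[|[|[|[|//]]]] Hj]; rewrite /= ?mulr1n ?mulr0n; ring.
Qed.
End SF.

Lemma gDg (R : rcfType) (g : 'M[R]_4) (u : 'cV[R]_4) : g *m g^T = 1%:M ->
  g *m delta_mx 0 0 *m g^T = u *m u^T ->
  g *m Dmat *m g^T = 1%:M - 4%:R *: (u *m u^T).
Proof.
move=> h1 h2.
by rewrite Dm mulmxBr mulmx1 mulmxBl h1 -scalemxAr -scalemxAl h2.
Qed.

Theorem mainTheorem7 (R : rcfType) (Q P : 'M[R]_4) :
  sym_tracefree Q -> sym_tracefree P -> \det Q < 0 ->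
  (exists mu : R, mu != 0 /\ P = mu *: Q) ->
  (exists nu : R, tf_part (\adj Q) = nu *: tf_part (P *m P)) ->
  exists (g : 'M[R]_4) (q p : R),
    [/\ in_SO4 g, q != 0, p != 0,
        Q = q *: (g *m Dmat *m g^T) & P = p *: (g *m Dmat *m g^T)].
Proof.
move=> [QT QTr] _ hd [mu [mu0 hP]] [nu hnu].
pose kap := nu * mu ^+ 2.
move: hnu; rewrite /tf_part.
set tA := \tr (\adj Q); set tX := \tr (P *m P) => h.
have hk : \adj Q = kap *: Q ^+ 2 + (tA / 4%:R - nu * (tX / 4%:R))%:M.
  have -> : \adj Q = nu *: (P *m P - (tX / 4%:R)%:M) + (tA / 4%:R)%:M by rewrite -h subrK.
  rewrite hP -scalemxAl -scalemxAr scalerA mulmxE -expr2.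
  by apply/matrixP => i j; rewrite !mxE /kap; ring.
have [a [a0 ha]] := key QTr hd hk.
pose t := (4%:R * a)^-1.
pose m := NF 0 0 0 (- t) (t * a).
have hm : horner_mx Q (m * m - m) = 0.
  have -> : m * m - m = NF 0 0 (t ^+ 2) (- 2%:R * t ^+ 2 * a + t) (t ^+ 2 * a ^+ 2 - t * a)
    by rewrite /m /NF; ring.
  have e1 : - 2%:R * t ^+ 2 * a + t = t ^+ 2 * (2%:R * a) by rewrite /t; field.
  have e2 : t ^+ 2 * a ^+ 2 - t * a = t ^+ 2 * (- (3%:R * a ^+ 2)) by rewrite /t; field.
  have -> : NF 0 0 (t ^+ 2) (- 2%:R * t ^+ 2 * a + t) (t ^+ 2 * a ^+ 2 - t * a) =
    (t ^+ 2)%:P * NF 0 0 1 (2%:R * a) (- (3%:R * a ^+ 2)) by rewrite e1 e2 /NF; ring.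
  by apply: annM.
pose M := horner_mx Q m.
have MM : M *m M = M.
  by move: hm; rewrite rmorphB rmorphM /= -/M mulmxE => /eqP; rewrite subr_eq0 => /eqP.
have hM : M = (- t) *: Q + (t * a)%:M.
  by rewrite /M /m hornNF !scale0r !add0r.
have MT : M^T = M by rewrite hM linearD linearZ /= QT tr_scalar_mx.
have Mtr : \tr M = 1.
  rewrite hM linearD linearZ /= QTr mxtrace_scalar mulr0 add0r /t.
  by rewrite -mulr_natr; field.
have [u [hMu huu]] := rank1 MT MM Mtr.
have hQ : Q = a *: (1%:M - 4%:R *: (u *m u^T)).
  by rewrite -hMu hM; apply/matrixP => i j; rewrite !mxE /t; field.
have [H [HH HE]] := householder huu.
have dH : \det H ^+ 2 = 1.
  by have := congr1 determinant HH; rewrite det_mulmx det_tr det1 expr2.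
have [F [FF dF FE]] := @Fmat R.
have [g [gg dg gE]] : exists g : 'M[R]_4, [/\ g *m g^T = 1%:M, \det g = 1 &
    g *m delta_mx 0 0 *m g^T = u *m u^T].
  move/eqP: dH; rewrite sqrf_eq1 => /orP [/eqP d1|/eqP d1].
    by exists H.
  exists (H *m F); split.
  - by rewrite trmx_mul mulmxA -[H *m F *m F^T]mulmxA FF mulmx1.
  - by rewrite det_mulmx d1 dF mulrNN mulr1.
  - by rewrite trmx_mul !mulmxA -[H *m F *m delta_mx 0 0]mulmxA -[H *m (F *m delta_mx 0 0) *m F^T]mulmxA FE.
have gD := gDg gg gE.
exists g; exists a; exists (mu * a); split => //.
- by rewrite mulf_neq0.
- by rewrite gD.
- by rewrite hP {1}hQ gD scalerA.
Qed.
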